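(* Let $r>5$ with $r\not\equiv 0\pmod 3$, and let $C_r$ be the directed cycle of length $r$. If some type-A prime divides $r$, then $\chi^*_o(C_r)\leq 4-\beta(r)$.
   Context: The directed cycle $C_r$ has vertices $u_i$, $i\in\mathbb{Z}/r\mathbb{Z}$, and arcs $u_iu_{i+1}$. For a set $S$ of $k$ colors, a $b$-fold oriented $k$-coloring of an oriented graph $G$ is a map $f$ from $V(G)$ to the $b$-element subsets of $S$ such that (i) $f(x)\cap f(y)=\emptyset$ for every arc $xy$, and (ii) for all arcs $xy, zw$, $f(x)\cap f(w)\neq\emptyset$ implies $f(y)\cap f(z)=\emptyset$. $\chi^b_o(G)$ is the minimum such $k$, and $\chi^*_o(G)=\lim_{b\to\infty}\chi^b_o(G)/b=\inf_{b\ge1}\chi^b_o(G)/b$. A prime $p>3$ is type-A if $p\equiv 3\pmod 4$. For $r>5$: $\beta(r)=0$ if $r$ has no type-A prime factor, and otherwise $\beta(r)=\frac{4}{p+1}$ where $p$ is the least type-A prime factor of $r$. *)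

(* Defs.v *)
From HB Require Import structures.
From mathcomp Require Import all_boot all_order all_algebra.
From mathcomp Require Import boolp classical_sets reals.
Set Implicit Arguments. Unset Strict Implicit. Unset Printing Implicit Defensive.
Import Order.TTheory GRing.Theory Num.Theory.

(* Directed cycle C_r: vertices u_i, i in Z/rZ (represented by 'I_r),
   arcs u_i u_{i+1}. *)
Definition cycle_arc (r : nat) : rel 'I_r := fun i j => j == ordS i.

Definition oriented_coloring (T : finType) (arc : rel T) (b k : nat)
    (f : T -> {set 'I_k}) : Prop :=
  [/\ (forall x, #|f x| = b),
      (forall x y, arc x y -> [disjoint f x & f y]) &
      (forall x y z w, arc x y -> arc z w ->
         ~~ [disjoint f x & f w] -> [disjoint f y & f z])].

Definition colorable (T : finType) (arc : rel T) (b k : nat) : Prop :=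
  exists f : T -> {set 'I_k}, @oriented_coloring T arc b k f.

(* chi^b_o(G): least k with a b-fold oriented k-coloring
   (defaults to 0 if none exists, which never happens for oriented graphs). *)
Definition chi_b (T : finType) (arc : rel T) (b : nat) : nat :=
  match pselect (exists k, `[< @colorable T arc b k >]) with
  | left h => ex_minn h
  | right _ => 0%N
  end.

Local Open Scope classical_set_scope.
Local Open Scope ring_scope.

Definition chi_star (R : realType) (T : finType) (arc : rel T) : R :=
  inf [set ((chi_b arc b)%:R / b%:R : R) | b in [set b : nat | (0 < b)%N]].

Definition typeA (p : nat) : bool := [&& prime p, (3 < p)%N & (p %% 4 == 3)%N].


Definition beta (R : realType) (r : nat) : R :=
  match pselect (exists p, typeA p && (p %| r)%N) with
  | left h => 4 / ((ex_minn h)%:R + 1)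
  | right _ => 0
  end.

(* Main.v *)
Require Import Defs.
From mathcomp Require Import all_boot all_order all_algebra.
From mathcomp Require Import boolp classical_sets reals.
From mathcomp Require Import zify ring lra.
Import Order.TTheory GRing.Theory Num.Theory.

Definition fcol (r p m : nat) (p0 : (0 < p)%N) (x : 'I_r) : {set 'I_p} :=
  [set Ordinal (ltn_pmod ((x * m.+1) %% p + val j) p0) | j : 'I_m.+1].

Lemma fcol_mem r p m p0 (x : 'I_r) (c : 'I_p) :
  c \in @fcol r p m p0 x -> exists2 j, (j < m.+1)%N & (val c = ((x * m.+1) + j) %% p)%N.
Proof.
case/imsetP=> j _ -> /=; exists (val j) => //=; by rewrite modnDml.
Qed.

Lemma fcol_card r p m p0 (x : 'I_r) : (m.+1 <= p)%N -> #|@fcol r p m p0 x| = m.+1.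
Proof.
move=> hm; rewrite card_imset ?card_ord // => j1 j2 /(congr1 val) /= /eqP.
rewrite eqn_modDl modn_small; last by apply: leq_trans hm.
rewrite modn_small; last by apply: leq_trans hm.
by move/eqP/val_inj.
Qed.

Lemma fcol_arc r p m p0 (x : 'I_r) (a c : 'I_p) : (p %| r)%N ->
  a \in @fcol r p m p0 x -> c \in @fcol r p m p0 (ordS x) ->
  exists2 e, (0 < e <= m.*2.+1)%N & (a + e = c %[mod p])%N.
Proof.
move=> pr /fcol_mem [j hj ->] /fcol_mem [j' hj' ->] /=.
exists (m.+1 + j' - j); first by lia.
rewrite modnDml modn_mod -addnA (_ : (j + _ = m.+1 + j')%N); last by lia.
rewrite -[in RHS]modnDml -[in RHS]modnMml. rewrite (modn_dvdm x.+1 pr) modnMml modnDml.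
congr (_ %% _); rewrite mulSn; lia.
Qed.

Lemma disjointP (T : finType) (A B : {set T}) :
  reflect (forall x, x \in A -> x \in B -> False) [disjoint A & B].
Proof.
apply: (iffP pred0P) => H x.
- by move=> xA xB; move: (H x); rewrite /= xA xB.
- by apply/negP => /andP[xA xB]; apply: (H x).
Qed.

Arguments fcol_arc {r p m p0 x a c}.

Lemma noloop p a e : (0 < e < p)%N -> (a + e = a %[mod p])%N -> False.
Proof.
move=> he /eqP; rewrite -{2}[a]addn0 eqn_modDl mod0n modn_small; last by lia.
lia.
Qed.

Lemma colorable_cycle r p m (p0 : (0 < p)%N) : (p %| r)%N -> (4 * m + 2 < p)%N ->
  colorable (@cycle_arc r) m.+1 p.
Proof.
move=> pr hp; exists (@fcol r p m p0); split.
- by move=> x; rewrite fcol_card //; lia.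
- move=> x y /eqP ->; apply/disjointP => a ax ay.
  have [e he hae] := fcol_arc pr ax ay.
  by apply: (@noloop p a e) => //; lia.
- move=> x y z w /eqP -> /eqP -> nd; apply/disjointP => c cy cz.
  move/negP: nd; apply; apply/disjointP => a ax aw.
  have [e1 he1 h1] := fcol_arc pr ax cy.
  have [e2 he2 h2] := fcol_arc pr cz aw.
  apply: (@noloop p a (e1 + e2)); first by lia.
  by rewrite addnA -modnDml h1 modnDml h2.
Qed.

Local Open Scope ring_scope.
Theorem lemma9 (R : realType) (r : nat) :
  (5 < r)%N -> ~~ (3 %| r)%N ->
  (exists p, typeA p && (p %| r)%N) ->
  chi_star R (@cycle_arc r) <= 4 - beta R r.
Proof.
move=> r5 r3 hex; rewrite /beta; case: pselect => [h|nh]; last by case: (nh hex).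
case: ex_minnP => p /andP[tA pr] _.
case/and3P: tA => _ p3 p4.
set m := (p %/ 4)%N.
have pm : p = (4 * m + 3)%N by rewrite /m (divn_eq p 4) (eqP p4); lia.
clearbody m.
have p0 : (0 < p)%N by lia.
have hp2 : (4 * m + 2 < p)%N by lia.
have col := @colorable_cycle r p m p0 pr hp2.
have hchi : (chi_b (@cycle_arc r) m.+1 <= p)%N.
  rewrite /chi_b; case: pselect => [h2|nh2].
    by case: ex_minnP => k _ hmin; apply: hmin; apply/asboolP.
  by exfalso; apply: nh2; exists p; apply/asboolP.
apply: (@le_trans _ _ ((chi_b (@cycle_arc r) m.+1)%:R / (m.+1)%:R)).
  apply: ge_inf.
    exists 0 => y [b /= b0 <-].
    by rewrite divr_ge0.
  by exists m.+1.
apply: (@le_trans _ _ (p%:R / (m.+1)%:R)).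
  by rewrite ler_pM2r ?invr_gt0 ?ltr0n // ler_nat.
rewrite pm le_eqVlt; apply/orP; left; apply/eqP.
have hm : 0 <= m%:R :> R := ler0n _ _.
field; apply/andP; split; rewrite gt_eqF //; lra.
Qed.
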